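(* Let $a,b,c$ be non-constant polynomials in $\mathbb{F}_2[t]$ and let $\boldsymbol{\varepsilon}=a,(b,c)^\infty$, i.e. $\varepsilon_0=a$, $\varepsilon_{2m+1}=b$, $\varepsilon_{2m+2}=c$ for $m\geq 0$. Let $\beta=1/CF(\mathbf{s}(\boldsymbol{\varepsilon}))$. Then $$\beta^4=\frac{bc(b+c)}{a}+\frac{c^2}{a^2}+bc(b+c)\,\beta+bc\,\beta^2.$$
   Context: Given a sequence $\boldsymbol{\varepsilon}=(\varepsilon_n)_{n\geq 0}$, define words $W_0=$ empty word and $W_{n+1}=W_n\,\varepsilon_n\,W_n$ (concatenation) for $n\geq 0$; $\mathbf{s}(\boldsymbol{\varepsilon})=(s_i)_{i\geq 0}$ is the infinite word beginning with every $W_n$, i.e. $\varepsilon_0\varepsilon_1\varepsilon_0\varepsilon_2\varepsilon_0\varepsilon_1\varepsilon_0\varepsilon_3\cdots$. $CF(\mathbf{s}(\boldsymbol{\varepsilon}))=[s_0,s_1,\dots]=s_0+1/(s_1+1/(s_2+\cdots))$ is the infinite continued fraction in $\mathbb{F}_2((1/t))$ with these partial quotients. *)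

(* Defs.v *)
From Stdlib Require Import ClassicalEpsilon.
From mathcomp Require Import all_boot all_order all_algebra.
From mathcomp Require Import zify.
Set Implicit Arguments. Unset Strict Implicit. Unset Printing Implicit Defensive.
Import Order.TTheory GRing.Theory Num.Theory.
Local Open Scope ring_scope.

(* An element of F_2((1/t)) is a family of coefficients (coefficient of t^k,
   k : int) vanishing for all sufficiently large k. *)
Definition bounded_above (f : int -> 'F_2) : Prop :=
  exists N : int, forall k : int, N < k -> f k = 0.

Record LS := MkLS { coef : int -> 'F_2; coefP : bounded_above coef }.

Definition ub (x : LS) : int :=
  proj1_sig (constructive_indefinite_description _ (coefP x)).

Lemma ubP (x : LS) k : ub x < k -> coef x k = 0.
Proof.
rewrite /ub; case: constructive_indefinite_description => N HN /=; exact: HN.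
Qed.

Definition lsadd_coef (x y : LS) (k : int) : 'F_2 := coef x k + coef y k.

Lemma lsadd_bounded x y : bounded_above (lsadd_coef x y).
Proof.
exists (Num.max (ub x) (ub y)) => k; rewrite gt_max => /andP[hx hy].
by rewrite /lsadd_coef !ubP ?addr0.
Qed.

Definition lsadd (x y : LS) : LS := MkLS (lsadd_bounded x y).

(* multiplication (Cauchy product): the coefficient of t^k is
   sum_{i + j = k} x_i y_j; only indices i in [k - ub y, ub x] can contribute,
   and the sum below runs over i = k - ub y + m, m < |ub x + ub y - k| + 1
   (when k > ub x + ub y every term vanishes anyway). *)
Definition lsmul_coef (x y : LS) (k : int) : 'F_2 :=
  \sum_(m < (absz (ub x + ub y - k)%R).+1)
     coef x (k - ub y + m%:Z) * coef y (k - (k - ub y + m%:Z)).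

Lemma lsmul_bounded x y : bounded_above (lsmul_coef x y).
Proof.
exists (ub x + ub y) => k hk; rewrite /lsmul_coef big1 // => m _.
rewrite ubP ?mul0r //.
have h0 : (0 <= m%:Z)%R by [].
move: hk h0; set u := ub x; set v := ub y; set w := m%:Z => hk h0.
lia.
Qed.

Definition lsmul (x y : LS) : LS := MkLS (lsmul_bounded x y).

Definition lspoly_coef (p : {poly 'F_2}) (k : int) : 'F_2 :=
  match k with Posz n => p`_n | Negz _ => 0 end.

Lemma lspoly_bounded p : bounded_above (lspoly_coef p).
Proof.
exists (size p)%:Z => -[n|n] //= hn; apply: nth_default; lia.
Qed.

Definition lspoly (p : {poly 'F_2}) : LS := MkLS (lspoly_bounded p).

Definition lsone : LS := lspoly 1.

Definition lsexp (x : LS) (n : nat) : LS := iter n (lsmul x) lsone.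

(* convergence in the (1/t)-adic topology: for every N, eventually x_n and x
   agree in all coefficients of degree >= N *)
Definition ls_cvg (xs : nat -> LS) (x : LS) : Prop :=
  forall N : int, exists n0 : nat, forall n, (n0 <= n)%N ->
    forall k : int, N <= k -> coef (xs n) k = coef x k.

(* cf_fin [:: s_0; ...; s_n] y  <->  y = [s_0, s_1, ..., s_n]
   = s_0 + 1/(s_1 + 1/(... + 1/s_n)) in F_2((1/t)) (all inverses existing). *)
Fixpoint cf_fin (l : seq {poly 'F_2}) (y : LS) {struct l} : Prop :=
  match l with
  | [::] => False
  | s :: rest =>
      match rest with
      | [::] => y = lspoly s
      | _ :: _ => exists z w : LS,
          cf_fin rest z /\ lsmul w z = lsone /\ y = lsadd (lspoly s) w
      end
  end.

Definition isCF (s : nat -> {poly 'F_2}) (x : LS) : Prop :=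
  exists xs : nat -> LS,
    (forall n, cf_fin (mkseq s n.+1) (xs n)) /\ ls_cvg xs x.

Fixpoint Wword (eps : nat -> {poly 'F_2}) (n : nat) : seq {poly 'F_2} :=
  match n with
  | 0 => [::]
  | n'.+1 => Wword eps n' ++ eps n' :: Wword eps n'
  end.

(* s_i is the i-th letter of W_{i+1} (which has length 2^(i+1) - 1 > i, and
   every W_n is a prefix of W_{n+1}) *)
Definition sseq (eps : nat -> {poly 'F_2}) (i : nat) : {poly 'F_2} :=
  nth 0 (Wword eps i.+1) i.

Definition eps_abc (a b c : {poly 'F_2}) (n : nat) : {poly 'F_2} :=
  if n == 0%N then a else if odd n then b else c.

(* Main.v *)
Require Import Defs.
From HB Require Import structures.
From mathcomp Require Import all_boot all_order all_algebra zify ring.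
From mathcomp Require Import boolp.
From Stdlib Require Import ProofIrrelevance.
Set Implicit Arguments. Unset Strict Implicit. Unset Printing Implicit Defensive.
Import Order.TTheory GRing.Theory Num.Theory.
Local Open Scope ring_scope.

Lemma F2xx (c : 'F_2) : c + c = 0.
Proof. rewrite -mulr2n -mulr_natr. have ->: (2%:R : 'F_2) = 0 by apply/eqP. by rewrite mulr0. Qed.

Lemma F2opp (c : 'F_2) : - c = c.
Proof. by apply/eqP; rewrite eq_sym -subr_eq0 opprK F2xx. Qed.

Lemma ls_ext (x y : LS) : (forall k, coef x k = coef y k) -> x = y.
Proof.
case: x => fx px; case: y => fy py /= H.
have E : fx = fy by apply: funext.
subst fy; f_equal; apply: proof_irrelevance.
Qed.

Lemma nz_le_ub (x : LS) i : coef x i != 0 -> i <= ub x.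
Proof. by move=> H; rewrite leNgt; apply/negP => /ubP; apply/eqP. Qed.

Definition isum (L : int) (n : nat) (f : int -> 'F_2) : 'F_2 :=
  \sum_(m < n) f (L + m%:Z).

Definition supp_in (f : int -> 'F_2) (L : int) (n : nat) :=
  forall i, f i != 0 -> L <= i /\ i < L + n%:Z.

Lemma isum_right L n f e : supp_in f L n -> isum L (n + e) f = isum L n f.
Proof.
move=> S; elim: e => [|e IH]; first by rewrite addn0.
rewrite addnS /isum big_ord_recr /= -/(isum _ _ _) IH.
have -> : f (L + (n + e)%N%:Z) = 0; last by rewrite addr0.
apply/eqP; apply: contraT => /S [_]; lia.
Qed.

Lemma isum_left L n f d e : supp_in f L n ->
  isum (L - d%:Z) (d + n + e) f = isum L n f.
Proof.
move=> S; elim: d => [|d IH].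
  by rewrite subr0 add0n isum_right.
rewrite -IH /isum addSn addSn big_ord_recl /=.
have -> : f (L - d.+1%:Z + 0%N%:Z) = 0.
  apply/eqP; apply: contraT => /S [H _]; lia.
rewrite add0r; apply: eq_bigr => i _; congr f; rewrite /bump /=; lia.
Qed.

Lemma isum_widen L n f L' n' : supp_in f L n -> L' <= L -> L + n%:Z <= L' + n'%:Z ->
  isum L' n' f = isum L n f.
Proof.
move=> S H1 H2.
have E1 : L' = L - (absz (L - L'))%:Z by lia.
have E2 : n' = (absz (L - L') + n + (n' - absz (L - L') - n))%N by lia.
by rewrite E1 E2 isum_left.
Qed.

Lemma isum_eq f L n L' n' : supp_in f L n -> supp_in f L' n' ->
  isum L n f = isum L' n' f.
Proof.
move=> S S'.
pose Lh := Num.min L L'.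
pose nh := absz ((Num.max (L + n%:Z) (L' + n'%:Z) - Lh)%R).
rewrite -(@isum_widen L n f Lh nh) // ?(@isum_widen L' n' f Lh nh) //; rewrite /nh /Lh; lia.
Qed.

Lemma supp_mono f L n L' n' : supp_in f L n -> L' <= L -> L + n%:Z <= L' + n'%:Z -> supp_in f L' n'.
Proof. move=> S H1 H2 i /S; lia. Qed.

Lemma isum_split f g L n : isum L n (fun i => f i + g i) = isum L n f + isum L n g.
Proof. by rewrite /isum big_split. Qed.

Lemma isum_rev f L n k : isum L n (fun i => f (k - i)) = isum (k - L - n%:Z + 1) n f.
Proof.
rewrite /isum (reindex_inj rev_ord_inj) /=; apply: eq_bigr => i _; congr f.
have := ltn_ord i; lia.
Qed.

Lemma isum_shift f L n d : isum L n (fun j => f (d + j)) = isum (d + L) n f.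
Proof. by rewrite /isum; apply: eq_bigr => i _; rewrite addrA. Qed.

Lemma isum0 f L n : (forall i, f i = 0) -> isum L n f = 0.
Proof. by move=> H; rewrite /isum big1. Qed.

Lemma isum_mulr f L n c : isum L n (fun i => f i * c) = isum L n f * c.
Proof. by rewrite /isum mulr_suml. Qed.
Lemma isum_mull f L n c : isum L n (fun i => c * f i) = c * isum L n f.
Proof. by rewrite /isum mulr_sumr. Qed.

Lemma isum_exchange L n L' n' (F : int -> int -> 'F_2) :
  isum L n (fun l => isum L' n' (F l)) = isum L' n' (fun i => isum L n (fun l => F l i)).
Proof. by rewrite /isum exchange_big. Qed.

Lemma isum_ext L n f g : (forall m, (m < n)%N -> f (L + m%:Z) = g (L + m%:Z)) -> isum L n f = isum L n g.
Proof. by move=> H; apply: eq_bigr => m _; apply: H. Qed.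

Definition cg (x y : LS) (k i : int) := coef x i * coef y (k - i).
Definition wsz (L U : int) : nat := (absz (U - L)).+1.

Lemma coef_add x y k : coef (lsadd x y) k = coef x k + coef y k.
Proof. by []. Qed.

Lemma coef_mul0 x y k : coef (lsmul x y) k = isum (k - ub y) (wsz (k - ub y) (ub x)) (cg x y k).
Proof.
rewrite /= /lsmul_coef /isum /wsz.
by have -> : ub x + ub y - k = ub x - (k - ub y) by lia.
Qed.

Lemma mul_nz (a b : 'F_2) : a * b != 0 -> a != 0 /\ b != 0.
Proof. by rewrite mulf_eq0 negb_or => /andP. Qed.

Lemma coef_mul x y k L n : supp_in (cg x y k) L n -> coef (lsmul x y) k = isum L n (cg x y k).
Proof.
move=> S; rewrite coef_mul0; apply: isum_eq => // i /mul_nz [/nz_le_ub H1 /nz_le_ub H2].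
rewrite /wsz; lia.
Qed.

Lemma coef_mul_big x y k : ub x + ub y < k -> coef (lsmul x y) k = 0.
Proof.
move=> H; have S : supp_in (cg x y k) 0 0.
  by move=> i /mul_nz [/nz_le_ub H1 /nz_le_ub H2]; lia.
by rewrite (coef_mul S) /isum big_ord0.
Qed.

Lemma mul_nz_le x y k : coef (lsmul x y) k != 0 -> k <= ub x + ub y.
Proof. by rewrite leNgt; apply: contra => /coef_mul_big ->. Qed.

Lemma lsmulC : commutative lsmul.
Proof.
move=> x y; apply: ls_ext => k.
rewrite (@coef_mul y x k (k - ub x) (wsz (k - ub x) (ub y))); last first.
  by move=> i /mul_nz [/nz_le_ub H1 /nz_le_ub H2]; rewrite /wsz; lia.
have -> : isum (k - ub x) (wsz (k - ub x) (ub y)) (cg y x k) =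
          isum (k - ub x) (wsz (k - ub x) (ub y)) (fun i => cg x y k (k - i)).
  by apply: eq_bigr => i _; rewrite /cg mulrC; congr (_ * coef y _); lia.
rewrite isum_rev coef_mul0; apply: isum_eq;
  by move=> i /mul_nz [/nz_le_ub H1 /nz_le_ub H2]; rewrite /wsz; lia.
Qed.

Lemma lsmulA : associative lsmul.
Proof.
move=> x y z; apply: ls_ext => k.
set A := ub x; set B := ub y; set C := ub z.
pose LI := k - B - C; pose nI := wsz LI A.
pose LJ := k - A - C; pose nJ := wsz LJ B.
pose LL := k - C; pose nL := wsz LL (A + B).
have E1 : coef (lsmul x (lsmul y z)) k =
   isum LI nI (fun i => isum LJ nJ (fun j => coef x i * (coef y j * coef z (k - i - j)))).
  rewrite (@coef_mul _ _ _ LI nI); last first.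
    move=> i /mul_nz [/nz_le_ub H1 /mul_nz_le H2]; rewrite /nI /wsz /LI; lia.
  apply: eq_bigr => m _; rewrite /cg isum_mull.
  case: (eqVneq (coef x (LI + m%:Z)) 0) => [->|nz]; first by rewrite !mul0r.
  move/nz_le_ub: nz => H; congr (_ * _); rewrite (@coef_mul _ _ _ LJ nJ) //.
  by move=> j /mul_nz [/nz_le_ub H1 /nz_le_ub H2]; rewrite /nJ /wsz /LJ; lia.
have E2 : coef (lsmul (lsmul x y) z) k =
   isum LL nL (fun l => isum LI nI (fun i => coef x i * coef y (l - i) * coef z (k - l))).
  rewrite (@coef_mul _ _ _ LL nL); last first.
    move=> i /mul_nz [/mul_nz_le H1 /nz_le_ub H2]; rewrite /nL /wsz /LL; lia.
  apply: eq_bigr => m _; rewrite /cg isum_mulr.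
  case: (eqVneq (coef z (k - (LL + m%:Z))) 0) => [->|nz]; first by rewrite !mulr0.
  move/nz_le_ub: nz => H; congr (_ * _); rewrite (@coef_mul _ _ _ LI nI) //.
  by move=> j /mul_nz [/nz_le_ub H1 /nz_le_ub H2]; rewrite /nI /wsz /LI /LL in H *; lia.
rewrite E1 E2 [in RHS]isum_exchange; apply: isum_ext => m _.
set i := LI + m%:Z.
case: (eqVneq (coef x i) 0) => [x0|nz].
  by rewrite !isum0 // => j; rewrite x0 !mul0r.
move/nz_le_ub: nz => Hi.
have -> : isum LJ nJ (fun j => coef x i * (coef y j * coef z (k - i - j))) =
          isum LJ nJ (fun j => (fun l => coef x i * coef y (l - i) * coef z (k - l)) (i + j)).
  by apply: eq_bigr => j _ /=; rewrite mulrA; congr (_ * coef y _ * coef z _); lia.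
rewrite (isum_shift (fun l => coef x i * coef y (l - i) * coef z (k - l))); apply: isum_eq => l /mul_nz [/mul_nz [_ /nz_le_ub H1] /nz_le_ub H2];
  rewrite /nJ /nL /wsz /LJ /LL; lia.
Qed.

Definition lszero := lspoly 0.

Lemma coef_lspoly p k : coef (lspoly p) k = if k is Posz n then p`_n else 0.
Proof. by []. Qed.

Lemma coef_lszero k : coef lszero k = 0.
Proof. by rewrite coef_lspoly; case: k => // n; rewrite coef0. Qed.

Lemma lsmulDl : left_distributive lsmul lsadd.
Proof.
move=> x y z; apply: ls_ext => k.
set A := ub x; set B := ub y; set C := ub z.
pose L := k - C; pose n := wsz L (`|A|%:Z + `|B|%:Z).
rewrite coef_add (@coef_mul _ _ _ L n); last first.
  move=> i /mul_nz []; rewrite coef_add => H1 /nz_le_ub H2.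
  have : i <= A \/ i <= B.
    case: (eqVneq (coef x i) 0) => [x0|/nz_le_ub]; last by left.
    by right; apply: nz_le_ub; move: H1; rewrite x0 add0r.
  rewrite /n /wsz /L; lia.
rewrite (@coef_mul _ _ _ L n); last first.
  by move=> i /mul_nz [/nz_le_ub H1 /nz_le_ub H2]; rewrite /n /wsz /L; lia.
rewrite (@coef_mul _ _ _ L n); last first.
  by move=> i /mul_nz [/nz_le_ub H1 /nz_le_ub H2]; rewrite /n /wsz /L; lia.
by rewrite -isum_split; apply: eq_bigr => m _; rewrite /cg coef_add mulrDl.
Qed.

Lemma lsmul1 : left_id lsone lsmul.
Proof.
move=> x; apply: ls_ext => k.
rewrite (@coef_mul _ _ _ 0 1); last first.
  move=> i /mul_nz [] /[swap] _; rewrite /lsone coef_lspoly.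
  by case: i => [[|n]|n] //=; rewrite coef1.
by rewrite /isum big_ord1 /cg /lsone coef_lspoly /= coef1 /= mul1r subr0.
Qed.

Lemma lsone_neq0 : lsone <> lszero.
Proof.
move=> H; have := congr1 (fun z => coef z 0) H.
by rewrite coef_lszero /lsone coef_lspoly /= coef1 /=; apply/eqP; rewrite oner_eq0.
Qed.

Lemma lsaddA : associative lsadd.
Proof. by move=> x y z; apply: ls_ext => k; rewrite !coef_add addrA. Qed.
Lemma lsaddC : commutative lsadd.
Proof. by move=> x y; apply: ls_ext => k; rewrite !coef_add addrC. Qed.
Lemma lsadd0 : left_id lszero lsadd.
Proof. by move=> x; apply: ls_ext => k; rewrite !coef_add coef_lszero add0r. Qed.
Lemma lsaddN : left_inverse lszero id lsadd.
Proof. by move=> x; apply: ls_ext => k; rewrite !coef_add coef_lszero F2xx. Qed.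

HB.instance Definition _ := gen_eqMixin LS.
HB.instance Definition _ := gen_choiceMixin LS.
HB.instance Definition _ := GRing.isZmodule.Build LS lsaddA lsaddC lsadd0 lsaddN.
Lemma lsone_neq0' : lsone != lszero.
Proof. by apply/eqP; exact: lsone_neq0. Qed.
HB.instance Definition _ := GRing.Zmodule_isComNzRing.Build LS lsmulA lsmulC lsmul1 lsmulDl lsone_neq0'.

Lemma lsaddE : lsadd = +%R. Proof. by []. Qed.
Lemma lsmulE : lsmul = *%R. Proof. by []. Qed.
Lemma lsoneE : lsone = 1. Proof. by []. Qed.
Lemma lszeroE : lszero = 0. Proof. by []. Qed.


Lemma LS2 (x : LS) : x + x = 0.
Proof. exact: lsaddN. Qed.
Lemma LSopp (x : LS) : - x = x.
Proof. by []. Qed.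
Lemma LSsq (x y : LS) : (x + y) ^+ 2 = x ^+ 2 + y ^+ 2.
Proof.
have -> : (x + y) ^+ 2 = x ^+ 2 + y ^+ 2 + (x * y + x * y) by ring.
by rewrite LS2 addr0.
Qed.
Lemma LS4 (x y : LS) : (x + y) ^+ 4 = x ^+ 4 + y ^+ 4.
Proof.
have E : forall z : LS, z ^+ 4 = (z ^+ 2) ^+ 2 by move=> z; rewrite -exprM.
by rewrite !E !LSsq.
Qed.
Lemma coef_opp (x : LS) k : coef (- x) k = coef x k.
Proof. by []. Qed.
Lemma coef_addE (x y : LS) k : coef (x + y) k = coef x k + coef y k.
Proof. by []. Qed.

Lemma PF2opp (p : {poly 'F_2}) : - p = p.
Proof. by apply/polyP => i; rewrite coefN F2opp. Qed.
Lemma PF2xx (p : {poly 'F_2}) : p + p = 0.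
Proof. by rewrite -{1}(PF2opp p) addNr. Qed.

Lemma lspolyD p q : lspoly (p + q) = lspoly p + lspoly q.
Proof. by apply: ls_ext => -[n|n]; rewrite coef_add !coef_lspoly ?coefD ?addr0. Qed.

Lemma lspolyM p q : lspoly (p * q) = lspoly p * lspoly q.
Proof.
apply: ls_ext => k; rewrite coef_lspoly.
case: k => [K|K].
  rewrite (@coef_mul _ _ _ 0 K.+1); last first.
    move=> i /mul_nz []; rewrite !coef_lspoly.
    case: i => [i|i] // _; case E: (K%:Z - i%:Z) => [j|j] // _; lia.
  rewrite coefM /isum; apply: eq_bigr => i _; rewrite /cg !coef_lspoly add0r.
  have -> : (K%:Z - i%:Z) = (K - i)%N%:Z by rewrite subzn // -ltnS.
  by [].
rewrite (@coef_mul _ _ _ 0 0) ?/isum ?big_ord0 //.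
move=> i /mul_nz []; rewrite !coef_lspoly.
case: i => [i|i] // _; case E: (Negz K - i%:Z) => [j|j] // _; lia.
Qed.

Lemma lspoly1 : lspoly 1 = 1. Proof. by []. Qed.
Lemma lspoly0 : lspoly 0 = 0. Proof. by []. Qed.
Lemma lspolyX p n : lspoly (p ^+ n) = lspoly p ^+ n.
Proof. by elim: n => [|n IH]; rewrite ?expr0 // !exprS lspolyM IH. Qed.

Definition small (N : int) (z : LS) := forall k, N <= k -> coef z k = 0.

Lemma small_le N M z : small N z -> N <= M -> small M z.
Proof. by move=> H NM k Mk; apply: H; lia. Qed.

Lemma smallD N y z : small N y -> small N z -> small N (y + z).
Proof. by move=> Hy Hz k Nk; rewrite coef_addE Hy ?Hz ?addr0. Qed.

Lemma smallM M N y z : small M y -> small N z -> small (M + N - 1) (y * z).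
Proof.
move=> Hy Hz k Hk.
have S : supp_in (cg y z k) 0 0.
  move=> i /mul_nz [H1 H2].
  have h1 : i < M by rewrite ltNge; apply: contra H1 => /Hy ->.
  have h2 : k - i < N by rewrite ltNge; apply: contra H2 => /Hz ->.
  lia.
by rewrite (coef_mul S) /isum big_ord0.
Qed.

Lemma small_poly (p : {poly 'F_2}) : small (size p)%:Z (lspoly p).
Proof. move=> [n|n] //= H; apply: nth_default; lia. Qed.

Lemma small_ub x : small (ub x + 1) x.
Proof. by move=> k H; apply: ubP; lia. Qed.

Lemma small_all z : (forall N, small N z) -> z = 0.
Proof. by move=> H; apply: ls_ext => k; rewrite coef_lszero; apply: (H k). Qed.

Lemma small_eq N y z k : small N (y + z) -> N <= k -> coef y k = coef z k.
Proof.
move=> H /H; rewrite coef_addE => /eqP; rewrite addr_eq0 F2opp => /eqP //.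
Qed.

Definition invc (p : {poly 'F_2}) (k : int) : 'F_2 :=
  ('X^(absz k) %/ p)`_(absz (k + (absz k)%:Z)).

Lemma size_divXn (p : {poly 'F_2}) n : p != 0 -> size ('X^n %/ p) = (n.+1 - (size p).-1)%N.
Proof. by move=> pn0; rewrite size_divp // size_polyXn. Qed.

Lemma invc_bounded (p : {poly 'F_2}) : bounded_above (invc p).
Proof.
exists 1 => k Hk; rewrite /invc.
case: (eqVneq p 0) => [->|pn0]; first by rewrite divp0 coef0.
apply: nth_default; rewrite size_divXn //; lia.
Qed.

Definition lsinv p : LS := MkLS (invc_bounded p).

Lemma small_inv (p : {poly 'F_2}) : p != 0 -> small (2 - (size p)%:Z) (lsinv p).
Proof.
move=> pn0 k Hk /=; rewrite /invc; apply: nth_default; rewrite size_divXn //.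
have : (0 < size p)%N by rewrite size_poly_gt0.
lia.
Qed.

Lemma divXn_shift (p : {poly 'F_2}) N N' j : p != 0 -> (N <= N')%N ->
  ('X^N' %/ p)`_(j + (N' - N)) = ('X^N %/ p)`_j.
Proof.
move=> pn0 NN; set e := (N' - N)%N.
have -> : 'X^N' = 'X^e * 'X^N :> {poly 'F_2} by rewrite -exprD; congr (_ ^+ _); rewrite /e; lia.
rewrite {1}(divp_eq 'X^N p) mulrDr mulrA divpD mulpK // coefD coefXnM.
have -> : (j + e < e)%N = false by lia.
rewrite addnK [X in _ + X]nth_default ?addr0 //.
rewrite size_divp //; have := size_polyMleq 'X^e ('X^N %% p).
rewrite size_polyXn; have := ltn_modp 'X^N p; rewrite pn0 => H1 H2.
have nf : forall s1 s2 s3 e j : nat, (s2 < s3)%N -> (s1 <= (e.+1 + s2).-1)%N -> (s1 - s3.-1 <= j + e)%N.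
  by move=> s1 s2 s3 e' j'; rewrite -!subn1; lia.
exact: nf H1 H2.
Qed.

Lemma invc_eq (p : {poly 'F_2}) k N : p != 0 -> (absz k <= N)%N -> 0 <= N%:Z + k ->
  invc p k = ('X^N %/ p)`_(absz (N%:Z + k)).
Proof.
move=> pn0 H1 H2; rewrite /invc -(divXn_shift _ pn0 H1); congr (_ `_ _); lia.
Qed.

Lemma lspoly_nz (p : {poly 'F_2}) i : coef (lspoly p) i != 0 -> 0 <= i /\ i < (size p)%:Z.
Proof.
case: i => [i|i] //= H; split => //.
by rewrite ltz_nat ltnNge; apply: contra H => /(nth_default 0) ->.
Qed.

Lemma lsinvP (p : {poly 'F_2}) : p != 0 -> lspoly p * lsinv p = 1.
Proof.
move=> pn0; apply: ls_ext => k.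
set sp := size p.
have sp0 : (0 < sp)%N by rewrite size_poly_gt0.
pose N := (absz k + sp)%N.
pose q := 'X^N %/ p; pose K := absz (N%:Z + k).
rewrite -lsmulE (@coef_mul _ _ _ 0 sp); last first.
  by move=> i /mul_nz [/lspoly_nz H _]; lia.
have E : isum 0 sp (cg (lspoly p) (lsinv p) k) = \sum_(m < sp) p`_m * q`_(K - m).
  apply: eq_bigr => m _; rewrite /cg add0r coef_lspoly /=.
  rewrite (@invc_eq p _ N) //; last by have := ltn_ord m; lia.
    by congr (_ * q`_ _); have := ltn_ord m; lia.
  by have := ltn_ord m; lia.
rewrite E.
have HK : (sp <= K.+1)%N by lia.
have -> : \sum_(m < sp) p`_m * q`_(K - m) = (q * p)`_K.
  rewrite mulrC coefM (big_ord_widen _ (fun m => p`_m * q`_(K - m)) HK) big_mkcond /=.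
  apply: eq_bigr => m _; case: ifP => // /negbT; rewrite -leqNgt => /(nth_default 0) ->.
  by rewrite mul0r.
have -> : q * p = 'X^N - 'X^N %% p by rewrite {1}(divp_eq 'X^N p) addrK.
rewrite coefB coefXn [X in _ - X]nth_default ?subr0; last first.
  have := ltn_modp 'X^N p; rewrite pn0 => /= h; apply: leq_trans (ltnW h) _.
  have h2 : (sp <= K)%N by rewrite /K /N; lia.
  exact: h2.
have HKN : (K == N) = (k == 0).
  by rewrite /K /N; case: eqP; case: eqP => //; lia.
rewrite HKN -lsoneE coef_lspoly; case: k {E HK HKN N q K} => [[|n]|n] //=; by rewrite coef1.
Qed.

Lemma lsinv_unique (p : {poly 'F_2}) u : p != 0 -> lspoly p * u = 1 -> u = lsinv p.
Proof.
move=> pn0 H; rewrite -[u]mulr1 -(lsinvP pn0) mulrA (mulrC u) H mul1r //.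
Qed.

Lemma lsinvM (p q : {poly 'F_2}) : p != 0 -> q != 0 -> lsinv (p * q) = lsinv p * lsinv q.
Proof.
move=> pn0 qn0; symmetry; apply: lsinv_unique; first by rewrite mulf_neq0.
by rewrite lspolyM mulrACA !lsinvP // mulr1.
Qed.

Lemma lsinv1 : lsinv 1 = 1.
Proof. by symmetry; apply: lsinv_unique; rewrite ?oner_neq0 // lspoly1 mulr1. Qed.

Lemma lsinvK (p : {poly 'F_2}) : p != 0 -> lsinv p * lspoly p = 1.
Proof. by move=> pn0; rewrite mulrC lsinvP. Qed.

Inductive M2 := mk2 of {poly 'F_2} & {poly 'F_2} & {poly 'F_2} & {poly 'F_2}.
Definition mul2 (A B : M2) : M2 :=
  let: mk2 a b c d := A in let: mk2 a' b' c' d' := B in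
  mk2 (a * a' + b * c') (a * b' + b * d') (c * a' + d * c') (c * b' + d * d').
Definition id2 := mk2 1 0 0 1.
Definition Ms (s : {poly 'F_2}) := mk2 s 1 1 0.
Definition Mlist (l : seq {poly 'F_2}) : M2 := foldr (fun s acc => mul2 (Ms s) acc) id2 l.
Definition tr2 (A : M2) := let: mk2 a b c d := A in mk2 a c b d.
Definition det2 (A : M2) := let: mk2 a b c d := A in a * d - b * c.
Definition e11 (A : M2) := let: mk2 a _ _ _ := A in a.
Definition e12 (A : M2) := let: mk2 _ b _ _ := A in b.
Definition e21 (A : M2) := let: mk2 _ _ c _ := A in c.
Definition e22 (A : M2) := let: mk2 _ _ _ d := A in d.

Lemma mul2A A B C : mul2 A (mul2 B C) = mul2 (mul2 A B) C.
Proof. by case: A; case: B; case: C => *; rewrite /=; congr mk2; ring. Qed.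
Lemma mul1_2 A : mul2 id2 A = A.
Proof. by case: A => *; rewrite /=; congr mk2; ring. Qed.
Lemma mul2_1 A : mul2 A id2 = A.
Proof. by case: A => *; rewrite /=; congr mk2; ring. Qed.
Lemma tr2M A B : tr2 (mul2 A B) = mul2 (tr2 B) (tr2 A).
Proof. by case: A; case: B => *; rewrite /=; congr mk2; ring. Qed.
Lemma det2M A B : det2 (mul2 A B) = det2 A * det2 B.
Proof. by case: A; case: B => *; rewrite /=; ring. Qed.

Lemma Mlist_cons s l : Mlist (s :: l) = mul2 (Ms s) (Mlist l).
Proof. by []. Qed.
Lemma Mlist_nil : Mlist [::] = id2.
Proof. by []. Qed.

Lemma Mcat l1 l2 : Mlist (l1 ++ l2) = mul2 (Mlist l1) (Mlist l2).
Proof.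
elim: l1 => [|s l1 IH]; first by rewrite cat0s Mlist_nil mul1_2.
by rewrite cat_cons !Mlist_cons IH mul2A.
Qed.

Lemma Mrev l : Mlist (rev l) = tr2 (Mlist l).
Proof.
elim: l => [|s l IH] //.
rewrite rev_cons -cats1 Mcat IH Mlist_cons Mlist_cons Mlist_nil mul2_1 tr2M.
by case: (Mlist l).
Qed.

Lemma Mdet l : det2 (Mlist l) = 1.
Proof.
elim: l => [|s l IH]; first by rewrite Mlist_nil /= mulr1 mulr0 subr0.
rewrite Mlist_cons det2M IH /= mulr1 mulr0 mulr1 sub0r PF2opp //.
Qed.

Definition cfp l := e11 (Mlist l).
Definition cfq l := e21 (Mlist l).

Lemma cfp_cons s l : cfp (s :: l) = s * cfp l + cfq l.
Proof. by rewrite /cfp /cfq Mlist_cons; case: (Mlist l) => * /=; rewrite mul1r. Qed.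
Lemma cfq_cons s l : cfq (s :: l) = cfp l.
Proof. by rewrite /cfp /cfq Mlist_cons; case: (Mlist l) => * /=; rewrite mul1r mul0r addr0. Qed.
Lemma cfp_nil : cfp [::] = 1. Proof. by []. Qed.
Lemma cfq_nil : cfq [::] = 0. Proof. by []. Qed.

Definition goodl (l : seq {poly 'F_2}) := all (fun s : {poly 'F_2} => (1 < size s)%N) l.

Lemma cf_sizes l : goodl l -> (size (cfq l) < size (cfp l))%N /\ (size l < size (cfp l))%N.
Proof.
elim: l => [|s l IH] /=; first by rewrite cfp_nil cfq_nil size_poly1 size_poly0.
case/andP => hs /IH [h1 h2].
have pn0 : cfp l != 0 by rewrite -size_poly_gt0; exact: leq_ltn_trans (leq0n _) h1.
have sn0 : s != 0 by rewrite -size_poly_gt0; exact: ltnW hs.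
have hm : size (s * cfp l) = (size s + size (cfp l)).-1 by rewrite size_mul.
have nf1 : forall a b c : nat, (1 < a)%N -> (b < c)%N -> (b < (a + c).-1)%N by move=> *; lia.
have nf2 : forall a c : nat, (1 < a)%N -> (c < (a + c).-1)%N by move=> *; lia.
have nf3 : forall a b c : nat, (1 < a)%N -> (b < c)%N -> (b.+1 < (a + c).-1)%N by move=> *; lia.
rewrite cfp_cons cfq_cons size_addl; last by have := nf1 _ _ _ hs h1; rewrite -hm.
split; first by have := nf2 _ (size (cfp l)) hs; rewrite -hm.
by have := nf3 _ _ _ hs h2; rewrite -hm.
Qed.

Lemma cfp_neq0 l : goodl l -> cfp l != 0.
Proof. by case/cf_sizes => _ h; rewrite -size_poly_gt0; lia. Qed.
Lemma cfq_neq0 s l : goodl (s :: l) -> cfq (s :: l) != 0.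
Proof. by case/andP => _ h; rewrite cfq_cons cfp_neq0. Qed.

Lemma cf_fin_eq l y : cf_fin l y -> y * lspoly (cfq l) = lspoly (cfp l).
Proof.
elim: l y => [|s l IH] y //=.
case: l IH => [|r l] IH.
  by move=> ->; rewrite cfp_cons cfq_cons cfp_nil cfq_nil mulr1 addr0 lspoly1 mulr1.
case=> z [w [Hz [Hwz ->]]].
rewrite (cfq_cons s (r :: l)) (cfp_cons s (r :: l)) lspolyD lspolyM lsaddE mulrDl.
by congr (_ + _); rewrite -(IH z Hz) mulrA -lsmulE Hwz lsmulE mul1r.
Qed.

Lemma cf_fin_val l y : goodl l -> l != [::] -> cf_fin l y -> y = lspoly (cfp l) * lsinv (cfq l).
Proof.
case: l => [|s l] // G _ /cf_fin_eq <-.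
by rewrite -mulrA lsinvP ?mulr1 // cfq_neq0.
Qed.

Lemma cf_fin_mk l : goodl l -> l != [::] -> cf_fin l (lspoly (cfp l) * lsinv (cfq l)).
Proof.
elim: l => [|s l IH] //= /andP [hs G] _.
case: l IH G => [|r l] IH G.
  by rewrite cfp_cons cfq_cons cfp_nil cfq_nil mulr1 addr0 lsinv1 mulr1.
exists (lspoly (cfp (r :: l)) * lsinv (cfq (r :: l))).
exists (lspoly (cfq (r :: l)) * lsinv (cfp (r :: l))).
have pn0 := cfp_neq0 G; have qn0 := cfq_neq0 G.
split; first exact: IH.
split.
  rewrite lsmulE; transitivity ((lspoly (cfp (r :: l)) * lsinv (cfp (r :: l))) *
    (lspoly (cfq (r :: l)) * lsinv (cfq (r :: l)))); first ring.
  by rewrite !lsinvP // mulr1.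
rewrite lsaddE (cfq_cons s (r :: l)) (cfp_cons s (r :: l)) lspolyD lspolyM mulrDl -mulrA lsinvP // mulr1 //.
Qed.

Lemma goodl_mkseq (s : nat -> {poly 'F_2}) n : (forall i, (1 < size (s i))%N) -> goodl (mkseq s n).
Proof. by move=> H; apply/allP => x /mapP [i _ ->]; apply: H. Qed.

Lemma cfp_rcons l t : cfp (rcons l t) = cfp l * t + e12 (Mlist l).
Proof.
rewrite /cfp -cats1 Mcat Mlist_cons Mlist_nil; case: (Mlist l) => * /=; ring.
Qed.
Lemma cfq_rcons l t : cfq (rcons l t) = cfq l * t + e22 (Mlist l).
Proof.
rewrite /cfq -cats1 Mcat Mlist_cons Mlist_nil; case: (Mlist l) => * /=; ring.
Qed.

Lemma cf_key l t : cfp (rcons l t) * cfq l + cfp l * cfq (rcons l t) = 1.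
Proof.
rewrite cfp_rcons cfq_rcons; have := Mdet l; rewrite /cfp /cfq.
case: (Mlist l) => a b c d /= H.
have -> : (a * t + b) * c + a * (c * t + d) = (a * d - b * c) + (a * c * t + a * c * t).
  rewrite PF2opp; ring.
by rewrite H !PF2xx !addr0.
Qed.

Lemma size_cfq s l : goodl (s :: l) -> (size l < size (cfq (s :: l)))%N.
Proof. by case/andP => _ /cf_sizes [_ h]; rewrite cfq_cons. Qed.

Lemma mkseqSr (f : nat -> {poly 'F_2}) n : mkseq f n.+1 = f 0%N :: mkseq (fun i => f i.+1) n.
Proof.
apply: (@eq_from_nth _ 0); first by rewrite size_mkseq [RHS]/= size_mkseq.
rewrite size_mkseq => -[|i] Hi.
  by rewrite nth_mkseq.
rewrite nth_mkseq // [RHS]/= nth_mkseq //.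
Qed.

Definition xsq (s : nat -> {poly 'F_2}) n :=
  lspoly (cfp (mkseq s n.+1)) * lsinv (cfq (mkseq s n.+1)).

Lemma lszero_small N : small N 0.
Proof. by move=> k _; rewrite -lszeroE coef_lszero. Qed.

Lemma small_inv_le (p : {poly 'F_2}) (n : nat) : p != 0 -> (n <= size p)%N -> small (2 - n%:Z) (lsinv p).
Proof.
move=> pn0 h; apply: small_le (small_inv pn0) _.
have : (n%:Z <= (size p)%:Z) by rewrite lez_nat.
lia.
Qed.

Lemma xsq_diff (s : nat -> {poly 'F_2}) n : (forall i, (1 < size (s i))%N) -> small (- 2 * n%:Z) (xsq s n.+1 + xsq s n).
Proof.
move=> Hs.
set l := mkseq s n.+1.
have Gl : goodl l by apply: goodl_mkseq.
have El : mkseq s n.+2 = rcons l (s n.+1) by rewrite mkseqS.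
have Gl' : goodl (rcons l (s n.+1)) by rewrite -El; apply: goodl_mkseq.
rewrite /xsq El -/l.
set P := cfp l; set Q := cfq l; set P' := cfp (rcons l _); set Q' := cfq (rcons l _).
have hQ : Q != 0 by rewrite /Q /l mkseqSr; apply: cfq_neq0; rewrite -mkseqSr.
have hQ' : Q' != 0.
  by rewrite /Q' -El mkseqSr; apply: cfq_neq0; rewrite -mkseqSr El.
have key : lspoly P' * lspoly Q + lspoly P * lspoly Q' = 1 by rewrite -!lspolyM -lspolyD cf_key.
have -> : lspoly P' * lsinv Q' + lspoly P * lsinv Q = lsinv Q * lsinv Q'.
  transitivity (lspoly P' * lsinv Q' * (lspoly Q * lsinv Q) + lspoly P * lsinv Q * (lspoly Q' * lsinv Q')).
    by rewrite !lsinvP // !mulr1.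
  transitivity ((lspoly P' * lspoly Q + lspoly P * lspoly Q') * (lsinv Q * lsinv Q')); first ring.
  by rewrite key mul1r.
have sQ : (n.+1 <= size Q)%N.
  have := @size_cfq (s 0) (mkseq (fun i => s i.+1) n).
  rewrite /Q /l (mkseqSr s n) size_mkseq; move/(_ _); apply.
  by rewrite -mkseqSr; apply: goodl_mkseq.
have sQ' : (n.+2 <= size Q')%N.
  have := @size_cfq (s 0) (mkseq (fun i => s i.+1) n.+1).
  rewrite /Q' -El (mkseqSr s n.+1) size_mkseq; move/(_ _); apply.
  by rewrite -mkseqSr; apply: goodl_mkseq.
apply: small_le (smallM (small_inv_le hQ sQ) (small_inv_le hQ' sQ')) _.
lia.
Qed.

Lemma xsq_cauchy (s : nat -> {poly 'F_2}) n m : (forall i, (1 < size (s i))%N) -> (n <= m)%N ->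
  small (- 2 * n%:Z) (xsq s m + xsq s n).
Proof.
move=> Hs; elim: m => [|m IH].
  by rewrite leqn0 => /eqP ->; rewrite LS2; apply: lszero_small.
rewrite leq_eqVlt => /orP [/eqP <-|]; first by rewrite LS2; apply: lszero_small.
rewrite ltnS => nm; have H := IH nm.
have -> : xsq s m.+1 + xsq s n = (xsq s m.+1 + xsq s m) + (xsq s m + xsq s n).
  by rewrite -addrA (addrA (xsq s m)) LS2 add0r.
apply: smallD => //; apply: small_le (@xsq_diff s m Hs) _.
have : (n%:Z <= m%:Z) by rewrite lez_nat.
lia.
Qed.

Lemma xsq0 (s : nat -> {poly 'F_2}) : xsq s 0 = lspoly (s 0%N).
Proof.
by rewrite /xsq /= cfp_cons cfq_cons cfp_nil cfq_nil mulr1 addr0 lsinv1 mulr1.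
Qed.

Lemma xsq_agree (s : nat -> {poly 'F_2}) n m k : (forall i, (1 < size (s i))%N) ->
  - 2 * (minn n m)%:Z <= k -> coef (xsq s n) k = coef (xsq s m) k.
Proof.
move=> Hs Hk.
rewrite (small_eq (xsq_cauchy Hs (geq_minl n m)) Hk).
by rewrite (small_eq (xsq_cauchy Hs (geq_minr n m)) Hk).
Qed.

Definition limc (s : nat -> {poly 'F_2}) (k : int) := coef (xsq s (absz k)) k.

Lemma limc_bounded (s : nat -> {poly 'F_2}) : (forall i, (1 < size (s i))%N) -> bounded_above (limc s).
Proof.
move=> Hs; exists (size (s 0%N))%:Z => k Hk; rewrite /limc.
rewrite (@xsq_agree s _ 0) ?xsq0; last by rewrite minn0; lia.
by apply: small_poly; lia.
exact: Hs.
Qed.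

Lemma cf_exists (s : nat -> {poly 'F_2}) : (forall i, (1 < size (s i))%N) -> exists x, isCF s x.
Proof.
move=> Hs; exists (MkLS (limc_bounded Hs)); exists (xsq s); split.
  by move=> n; apply: cf_fin_mk => //; apply: goodl_mkseq.
move=> N; exists (absz N) => n Hn k Hk /=; rewrite /limc.
apply: xsq_agree => //.
have : ((absz N)%:Z <= n%:Z) by rewrite lez_nat.
case: (leqP n (absz k)) => h.
  lia.
lia.
Qed.

Lemma size_W (eps : nat -> {poly 'F_2}) m : size (Wword eps m) = (2 ^ m - 1)%N.
Proof.
elim: m => [|m IH] //=; rewrite size_cat /= IH expnS.
have : (0 < 2 ^ m)%N by rewrite expn_gt0.
lia.
Qed.

Lemma rev_W (eps : nat -> {poly 'F_2}) m : rev (Wword eps m) = Wword eps m.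
Proof. by elim: m => [|m IH] //=; rewrite rev_cat rev_cons IH -cats1 -catA. Qed.

Lemma W_prefix (eps : nat -> {poly 'F_2}) m m' i : (m <= m')%N -> (i < size (Wword eps m))%N ->
  nth 0 (Wword eps m') i = nth 0 (Wword eps m) i.
Proof.
move=> + hi; elim: m' => [|m' IH]; first by rewrite leqn0 => /eqP ->.
rewrite leq_eqVlt => /orP [/eqP -> //|]; rewrite ltnS => hm; rewrite -(IH hm).
rewrite /= nth_cat ifT //; apply: leq_trans hi _; rewrite !size_W.
have : (2 ^ m <= 2 ^ m')%N by rewrite leq_exp2l.
lia.
Qed.

Lemma mkseq_W (eps : nat -> {poly 'F_2}) m : mkseq (sseq eps) (2 ^ m - 1) = Wword eps m.
Proof.
apply: (@eq_from_nth _ 0); first by rewrite size_mkseq size_W.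
rewrite size_mkseq => i hi; rewrite nth_mkseq // /sseq.
have hi1 : (i < size (Wword eps i.+1))%N.
  by rewrite size_W; have := ltn_expl i.+1 (isT : (1 < 2)%N); lia.
have hi2 : (i < size (Wword eps m))%N by rewrite size_W.
case: (leqP i.+1 m) => h; first by rewrite (W_prefix h hi1).
by rewrite (W_prefix (ltnW h) hi2).
Qed.

Lemma all_W (eps : nat -> {poly 'F_2}) (P : pred {poly 'F_2}) m : (forall j, P (eps j)) -> all P (Wword eps m).
Proof. by move=> H; elim: m => [|m IH] //=; rewrite all_cat IH /= H IH. Qed.

Lemma sseq_good (eps : nat -> {poly 'F_2}) i : (forall j, (1 < size (eps j))%N) -> (1 < size (sseq eps i))%N.
Proof.
move=> H; rewrite /sseq.
have hi : (i < size (Wword eps i.+1))%N.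
  by rewrite size_W; have := ltn_expl i.+1 (isT : (1 < 2)%N); lia.
have := @all_W eps (fun s : {poly 'F_2} => (1 < size s)%N) i.+1 H.
by move/allP; apply; apply: mem_nth.
Qed.

Lemma Mlist_W (eps : nat -> {poly 'F_2}) m :
  Mlist (Wword eps m.+1) = mul2 (Mlist (Wword eps m)) (mul2 (Ms (eps m)) (Mlist (Wword eps m))).
Proof. by rewrite /= Mcat Mlist_cons. Qed.

Lemma W_sym (eps : nat -> {poly 'F_2}) m : e12 (Mlist (Wword eps m)) = e21 (Mlist (Wword eps m)).
Proof.
have := Mrev (Wword eps m); rewrite rev_W.
by case: (Mlist _) => a b c d /= [].
Qed.

Lemma cfp_W (eps : nat -> {poly 'F_2}) m : cfp (Wword eps m.+1) = eps m * cfp (Wword eps m) ^+ 2.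
Proof.
rewrite /cfp Mlist_W; have := W_sym eps m.
case: (Mlist _) => a b c d /= ->.
transitivity (eps m * a ^+ 2 + (a * c + a * c)); first ring.
by rewrite PF2xx addr0.
Qed.

Lemma cfq_W (eps : nat -> {poly 'F_2}) m : cfq (Wword eps m.+1) = eps m * cfp (Wword eps m) * cfq (Wword eps m) + 1.
Proof.
rewrite /cfp /cfq Mlist_W; have := W_sym eps m; have := Mdet (Wword eps m).
case: (Mlist _) => a b c d /= H E; subst b.
transitivity (eps m * a * c + (a * d - c * c)); first by rewrite PF2opp; ring.
by move: H => /= ->.
Qed.


Lemma beta_approx (s : nat -> {poly 'F_2}) (x beta : LS) (xs : nat -> LS) :
  (forall i, (1 < size (s i))%N) -> (forall n, cf_fin (mkseq s n.+1) (xs n)) -> ls_cvg xs x ->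
  beta * x = 1 ->
  forall N, exists n0, forall n, (n0 <= n)%N ->
    small N (beta + lspoly (cfq (mkseq s n.+1)) * lsinv (cfp (mkseq s n.+1))).
Proof.
move=> Hs Hcf Hcv Hbx N.
have [n0 Hn0] := Hcv (N - ub beta).
exists n0 => n hn.
set l := mkseq s n.+1.
have Gl : goodl l by apply: goodl_mkseq.
have pn0 : cfp l != 0 := cfp_neq0 Gl.
have qn0 : cfq l != 0 by rewrite /l mkseqSr; apply: cfq_neq0; rewrite -mkseqSr.
have Exs : xs n = lspoly (cfp l) * lsinv (cfq l) by apply: cf_fin_val => //; exact: Hcf.
have -> : beta + lspoly (cfq l) * lsinv (cfp l) =
    beta * (lsinv (cfp l) * lspoly (cfq l)) * (xs n + x).
  rewrite Exs mulrDr.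
  transitivity (beta * ((lspoly (cfp l) * lsinv (cfp l)) * (lspoly (cfq l) * lsinv (cfq l))) +
                (beta * x) * (lsinv (cfp l) * lspoly (cfq l))).
    by rewrite !lsinvP // !mulr1 Hbx mul1r (mulrC (lsinv (cfp l))).
  ring.
have h1 : small 1 (lsinv (cfp l) * lspoly (cfq l)).
  apply: small_le (smallM (small_inv pn0) (@small_poly (cfq l))) _.
  have [h _] := cf_sizes Gl.
  have : ((size (cfq l))%:Z < (size (cfp l))%:Z) by rewrite ltz_nat.
  lia.
have h2 : small (N - ub beta) (xs n + x).
  by move=> k hk; rewrite coef_addE (Hn0 n hn k hk) F2xx.
apply: small_le (smallM (smallM (@small_ub beta) h1) h2) _.
lia.
Qed.

Definition Pw (eps : nat -> {poly 'F_2}) m := cfp (Wword eps m).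
Definition Qw (eps : nat -> {poly 'F_2}) m := cfq (Wword eps m).
Definition ww (eps : nat -> {poly 'F_2}) m := lsinv (Pw eps m).
Definition bet (eps : nat -> {poly 'F_2}) m := lspoly (Qw eps m) * ww eps m.

Definition Kp (b c : {poly 'F_2}) := b * c * (b + c).
Definition Fz (b c : {poly 'F_2}) (ai z : LS) :=
  z ^+ 4 + lspoly (b * c) * z ^+ 2 + lspoly (Kp b c) * z + lspoly (Kp b c) * ai + lspoly (c ^+ 2) * ai ^+ 2.

Lemma Fz_add b c ai z d :
  Fz b c ai (z + d) = Fz b c ai z + (d ^+ 4 + lspoly (b * c) * d ^+ 2 + lspoly (Kp b c) * d).
Proof. rewrite /Fz LS4 LSsq; ring. Qed.

Lemma goodW (eps : nat -> {poly 'F_2}) m : (forall j, (1 < size (eps j))%N) -> goodl (Wword eps m).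
Proof. by move=> H; apply: (@all_W eps (fun s : {poly 'F_2} => (1 < size s)%N)). Qed.

Lemma Pw_neq0 (eps : nat -> {poly 'F_2}) m : (forall j, (1 < size (eps j))%N) -> Pw eps m != 0.
Proof. by move=> H; apply: cfp_neq0; apply: goodW. Qed.

Lemma size_Pw (eps : nat -> {poly 'F_2}) m : (forall j, (1 < size (eps j))%N) -> (m < size (Pw eps m))%N.
Proof.
move=> H; have [_ h] := cf_sizes (goodW m H).
rewrite size_W in h; have := ltn_expl m (isT : (1 < 2)%N).
move: h; rewrite /Pw; move: (size _) => z; lia.
Qed.

Lemma eps_neq0 (eps : nat -> {poly 'F_2}) j : (forall j, (1 < size (eps j))%N) -> eps j != 0.
Proof. by move=> H; rewrite -size_poly_gt0; apply: ltnW; apply: H. Qed.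

Lemma ww_succ (eps : nat -> {poly 'F_2}) m : (forall j, (1 < size (eps j))%N) ->
  ww eps m.+1 = lsinv (eps m) * ww eps m ^+ 2.
Proof.
move=> H; have hP := Pw_neq0 m H; have he := eps_neq0 m H.
rewrite /Pw in hP.
rewrite /ww /Pw cfp_W lsinvM //; last by rewrite expf_neq0.
by rewrite expr2 lsinvM // expr2.
Qed.

Lemma bet_succ (eps : nat -> {poly 'F_2}) m : (forall j, (1 < size (eps j))%N) ->
  bet eps m.+1 = bet eps m + ww eps m.+1.
Proof.
move=> H; rewrite /bet (ww_succ m H) /Qw cfq_W -/(Qw eps m) -/(Pw eps m).
have e1 := lsinvP (eps_neq0 m H); have e2 := lsinvP (Pw_neq0 m H).
rewrite lspolyD !lspolyM lspoly1.
transitivity ((lspoly (eps m) * lsinv (eps m)) * (lspoly (Pw eps m) * ww eps m) * (lspoly (Qw eps m) * ww eps m)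
   + lsinv (eps m) * ww eps m ^+ 2); first ring.
by rewrite e1 /ww e2 !mul1r.
Qed.

Lemma bet0 (eps : nat -> {poly 'F_2}) : bet eps 0 = 0.
Proof. by rewrite /bet /Qw /= cfq_nil lspoly0 mul0r. Qed.

Lemma ww1 (eps : nat -> {poly 'F_2}) : ww eps 1 = lsinv (eps 0%N).
Proof. by rewrite /ww /Pw /= cfp_cons cfp_nil cfq_nil mulr1 addr0. Qed.

Lemma epsS (a b c : {poly 'F_2}) j : eps_abc a b c j.+1 = if odd j then c else b.
Proof. by rewrite /eps_abc /=; case: (odd j). Qed.

Lemma eps_sum (a b c : {poly 'F_2}) j : eps_abc a b c j.+1 + eps_abc a b c j.+2 = b + c.
Proof. by rewrite !epsS /=; case: (odd j) => //; rewrite addrC. Qed.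
Lemma eps_prod (a b c : {poly 'F_2}) j : eps_abc a b c j.+1 * eps_abc a b c j.+2 = b * c.
Proof. by rewrite !epsS /=; case: (odd j) => //; rewrite mulrC. Qed.
Lemma eps_per (a b c : {poly 'F_2}) j : eps_abc a b c j.+3 = eps_abc a b c j.+1.
Proof. by rewrite !epsS /= negbK. Qed.

Lemma eps_good (a b c : {poly 'F_2}) : (1 < size a)%N -> (1 < size b)%N -> (1 < size c)%N ->
  forall j, (1 < size (eps_abc a b c j))%N.
Proof. by move=> ha hb hc [|j] //; rewrite epsS; case: (odd j). Qed.

Lemma closed_form (a b c : {poly 'F_2}) m : (1 < size a)%N -> (1 < size b)%N -> (1 < size c)%N ->
  Fz b c (ww (eps_abc a b c) 1) (bet (eps_abc a b c) m) =
    lspoly (Kp b c) * ww (eps_abc a b c) m.+1 + lspoly (b * c * (eps_abc a b c) m.+2) * ww (eps_abc a b c) m.+2.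
Proof.
move=> ha hb hc; have H := eps_good ha hb hc.
have Einv : forall j, lspoly ((eps_abc a b c) j) * lsinv ((eps_abc a b c) j) = 1 by move=> j; apply: lsinvP; apply: eps_neq0.
have Ew : forall j, ww (eps_abc a b c) j.+1 ^+ 2 = lspoly ((eps_abc a b c) j.+1) * ww (eps_abc a b c) j.+2.
  move=> j; rewrite (ww_succ j.+1 H) mulrA Einv mul1r //.
elim: m => [|m IH].
  rewrite bet0 /Fz (ww_succ 1 H) ww1.
  have E2 : eps_abc a b c 2 = c by []. have E1 : eps_abc a b c 1 = b by [].
  have E0 : eps_abc a b c 0 = a by [].
  have Eb := Einv 1%N; rewrite E1 in Eb.
  rewrite E2 E1 E0.
  transitivity (lspoly (Kp b c) * lsinv a + lspoly (c ^+ 2) * lsinv a ^+ 2); first ring.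
  rewrite lspolyX (lspolyM (b * c) c) (lspolyM b c).
  transitivity (lspoly (Kp b c) * lsinv a + lspoly c ^+ 2 * lsinv a ^+ 2 * (lspoly b * lsinv b)).
    by rewrite Eb mulr1.
  ring.
rewrite (bet_succ m H) Fz_add IH.
have E4 : ww (eps_abc a b c) m.+1 ^+ 4 = lspoly ((eps_abc a b c) m.+1) ^+ 2 * (lspoly ((eps_abc a b c) m.+2) * ww (eps_abc a b c) m.+3).
  by rewrite -Ew (_ : 4%N = 2 * 2)%N // exprM Ew exprMn.
rewrite E4 (Ew m).
have p1 : lspoly (b * c * (eps_abc a b c) m.+2) + lspoly (b * c) * lspoly ((eps_abc a b c) m.+1) = lspoly (Kp b c).
  rewrite -lspolyM -lspolyD /Kp -(eps_sum a b c m); congr lspoly; ring.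
have p2 : lspoly ((eps_abc a b c) m.+1) ^+ 2 * lspoly ((eps_abc a b c) m.+2) = lspoly (b * c * (eps_abc a b c) m.+3).
  rewrite -lspolyX -lspolyM eps_per; congr lspoly.
  rewrite -(eps_prod a b c m); ring.
transitivity ((lspoly (b * c * (eps_abc a b c) m.+2) + lspoly (b * c) * lspoly ((eps_abc a b c) m.+1)) * ww (eps_abc a b c) m.+2 +
   (lspoly ((eps_abc a b c) m.+1) ^+ 2 * lspoly ((eps_abc a b c) m.+2)) * ww (eps_abc a b c) m.+3 +
   (lspoly (Kp b c) * ww (eps_abc a b c) m.+1 + lspoly (Kp b c) * ww (eps_abc a b c) m.+1)); first ring.
by rewrite p1 p2 LS2 addr0.
Qed.

Lemma small_ww (eps : nat -> {poly 'F_2}) j : (forall j, (1 < size (eps j))%N) ->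
  small (1 - j%:Z) (ww eps j).
Proof.
move=> H; apply: small_le (small_inv_le (Pw_neq0 j H) (size_Pw j H)) _; lia.
Qed.

Lemma size_bce (a b c : {poly 'F_2}) j :
  (size ((b * c * eps_abc a b c j.+1)%R) <= size ((b * c * b)%R) + size ((b * c * c)%R))%N.
Proof. by rewrite epsS; case: (odd j); lia. Qed.

Lemma lsexpE (z : LS) n : lsexp z n = z ^+ n.
Proof. by elim: n => [|n IH] //=; rewrite exprS -IH. Qed.

Theorem mainTheorem4 (a b c : {poly 'F_2}) :
  (1 < size a)%N -> (1 < size b)%N -> (1 < size c)%N ->
  (exists x : LS, isCF (sseq (eps_abc a b c)) x) /\
  forall x beta ainv : LS,
    isCF (sseq (eps_abc a b c)) x ->
    lsmul beta x = lsone ->            (* beta = 1 / CF(s(eps)) *)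
    lsmul ainv (lspoly a) = lsone ->   (* ainv = 1 / a *)
    lsexp beta 4 =
      lsadd (lsmul (lspoly (b * c * (b + c))) ainv)
     (lsadd (lsmul (lspoly (c ^+ 2)) (lsexp ainv 2))
     (lsadd (lsmul (lspoly (b * c * (b + c))) beta)
            (lsmul (lspoly (b * c)) (lsexp beta 2)))).
Proof.
move=> ha hb hc.
have H := eps_good ha hb hc.
have Hs : forall i, (1 < size (sseq (eps_abc a b c) i))%N by move=> i; apply: sseq_good.
split; first exact: cf_exists Hs.
move=> x beta ainv [xs [Hcf Hcv]] Hbx Hai.
have an0 : a != 0 by rewrite -size_poly_gt0; apply: ltnW.
have Ea : ainv = ww (eps_abc a b c) 1.
  rewrite ww1; apply: lsinv_unique => //; rewrite mulrC; exact: Hai.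
have F0 : Fz b c ainv beta = 0.
  apply: small_all => N.
  pose sK := size (Kp b c); pose sbc := size (b * c).
  pose S := (size ((b * c * b)%R) + size ((b * c * c)%R))%N.
  pose D := - (absz N)%:Z - sbc%:Z - sK%:Z.
  have [n0 Hn0] := beta_approx Hs Hcf Hcv Hbx D.
  pose m := (n0 + absz N + sK + S + 2)%N.
  have hm1 : (n0 <= (2 ^ m - 2))%N.
    have := ltn_expl m (isT : (1 < 2)%N); rewrite /m; lia.
  have hm2 : ((2 ^ m - 2).+1 = 2 ^ m - 1)%N.
    have := ltn_expl m (isT : (1 < 2)%N); rewrite /m; lia.
  have Hd := Hn0 _ hm1; rewrite hm2 mkseq_W in Hd.
  have hd : small D (beta + bet (eps_abc a b c) m) by exact: Hd.
  set d := beta + bet (eps_abc a b c) m in hd.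
  have -> : beta = bet (eps_abc a b c) m + d by rewrite /d addrCA LS2 addr0.
  rewrite Ea Fz_add closed_form //.
  apply: smallD; first apply: smallD.
  - apply: small_le (smallM (@small_poly (Kp b c)) (@small_ww (eps_abc a b c) m.+1 H)) _.
    rewrite -/sK /m; lia.
  - apply: small_le (smallM (@small_poly (b * c * eps_abc a b c m.+2)) (@small_ww (eps_abc a b c) m.+2 H)) _.
    have := size_bce a b c m.+1; rewrite -/S => hS.
    have : ((size (b * c * eps_abc a b c m.+2))%:Z <= S%:Z) by rewrite lez_nat.
    rewrite /m; lia.
  have d2 : small (2 * D - 1) (d ^+ 2).
    by rewrite expr2; apply: small_le (smallM hd hd) _; lia.
  have d4 : small (4 * D - 3) (d ^+ 4).
    rewrite (_ : 4%N = 2 + 2)%N // exprD; apply: small_le (smallM d2 d2) _; lia.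
  apply: smallD; first apply: smallD.
  - by apply: small_le d4 _; rewrite /D; lia.
  - apply: small_le (smallM (@small_poly (b * c)) d2) _.
    by rewrite -/sbc /D; lia.
  - apply: small_le (smallM (@small_poly (Kp b c)) hd) _.
    by rewrite -/sK /D; lia.
rewrite !lsexpE lsaddE lsmulE.
apply/eqP; rewrite -subr_eq0 LSopp; apply/eqP; rewrite -F0 /Fz /Kp; ring.
Qed.
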